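(* Let $H$ be a graph with vertices $v$ and $w$ such that $\deg(v)=\deg(w)=1$ and $v$ and $w$ have no neighbors in common. Let $G$ be the graph formed from $H$ by adding a new vertex $u$ of degree 2 which is adjacent to $v$ and $w$. If there is an orthogonal vector representation of $\overline{H}$ in $\mathbb{R}^3$ which assigns distinct nonzero vectors to each vertex, then there is such an orthogonal vector representation of $\overline{G}$ in $\mathbb{R}^3$. Hence ${\rm mvr}(\overline{G})\le 3$.
   Context: All graphs are finite and simple; $\overline{G}$ denotes the complement of $G$. An orthogonal vector representation of a graph $G=(V,E)$ in $\mathbb{R}^d$ is a map $\phi:V\to\mathbb{R}^d$ with $\phi(v)\neq 0$ for all $v$, and for distinct $u,v$: $\langle\phi(u),\phi(v)\rangle=0$ if and only if $uv\notin E$. ${\rm mvr}(G)$ is the smallest $d$ for which such a representation exists. *)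

(* Defs.v *)
From HB Require Import structures.
From mathcomp Require Import all_boot all_order all_algebra.
From mathcomp Require Import reals.
Set Implicit Arguments. Unset Strict Implicit. Unset Printing Implicit Defensive.
Import Order.TTheory GRing.Theory Num.Theory.
Local Open Scope ring_scope.

Definition simple_graph (T : finType) (e : rel T) : Prop :=
  irreflexive e /\ symmetric e.

Definition compl_graph (T : finType) (e : rel T) : rel T :=
  fun x y => (x != y) && ~~ e x y.

Definition deg (T : finType) (e : rel T) (x : T) : nat := #|[set y | e x y]|.

Definition dotv (R : realType) (d : nat) (a b : 'rV[R]_d) : R :=
  \sum_(i < d) a 0 i * b 0 i.

Definition orth_rep (R : realType) (d : nat) (T : finType) (e : rel T)
  (phi : T -> 'rV[R]_d) : Prop :=
  (forall x, phi x != 0) /\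
  (forall x y, x != y -> (dotv (phi x) (phi y) == 0) = ~~ e x y).

Definition mvr_le (R : realType) (T : finType) (e : rel T) (k : nat) : Prop :=
  exists d : nat, (d <= k)%N /\ exists phi : T -> 'rV[R]_d, orth_rep e phi.

(* G = H plus a new vertex u (= None) adjacent exactly to v and w. *)
Definition add_vertex (T : finType) (e : rel T) (v w : T) : rel (option T) :=
  fun x y => match x, y with
  | Some a, Some b => e a b
  | None, Some b => (b == v) || (b == w)
  | Some a, None => (a == v) || (a == w)
  | None, None => false
  end.

(* Main.v *)
Require Import Defs.
From HB Require Import structures.
From mathcomp Require Import all_boot all_order all_algebra.
From mathcomp Require Import reals ring lra.
Import GRing.Theory Num.Theory.
Set Implicit Arguments. Unset Strict Implicit.
Local Open Scope ring_scope.

Definition i0 : 'I_3 := ord0.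
Definition i1 : 'I_3 := lift ord0 ord0.
Definition i2 : 'I_3 := lift ord0 (lift ord0 ord0).

Section G.
Variable K : comNzRingType.
Implicit Types a b c : 'rV[K]_3.
Definition d3 a b := a 0 i0 * b 0 i0 + a 0 i1 * b 0 i1 + a 0 i2 * b 0 i2.
Definition cr3 a b : 'rV[K]_3 := \row_j
  (if j == i0 then a 0 i1 * b 0 i2 - a 0 i2 * b 0 i1
   else if j == i1 then a 0 i2 * b 0 i0 - a 0 i0 * b 0 i2
   else a 0 i0 * b 0 i1 - a 0 i1 * b 0 i0).
Lemma cr3E0 a b : cr3 a b 0 i0 = a 0 i1 * b 0 i2 - a 0 i2 * b 0 i1.
Proof. by rewrite mxE. Qed.
Lemma cr3E1 a b : cr3 a b 0 i1 = a 0 i2 * b 0 i0 - a 0 i0 * b 0 i2.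
Proof. by rewrite mxE. Qed.
Lemma cr3E2 a b : cr3 a b 0 i2 = a 0 i0 * b 0 i1 - a 0 i1 * b 0 i0.
Proof. by rewrite mxE. Qed.
Lemma ord3P (P : 'I_3 -> Prop) : P i0 -> P i1 -> P i2 -> forall j, P j.
Proof.
move=> H0 H1 H2 [[|[|[|//]]] Hj].
- by have -> : Ordinal Hj = i0 by apply: val_inj.
- by have -> : Ordinal Hj = i1 by apply: val_inj.
- by have -> : Ordinal Hj = i2 by apply: val_inj.
Qed.
Lemma vec3P a b : a 0 i0 = b 0 i0 -> a 0 i1 = b 0 i1 -> a 0 i2 = b 0 i2 -> a = b.
Proof. by move=> H0 H1 H2; apply/rowP; apply: ord3P. Qed.
Lemma d3C a b : d3 a b = d3 b a.
Proof. rewrite /d3; ring. Qed.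
Lemma d3_cr3l a b : d3 (cr3 a b) a = 0.
Proof. rewrite /d3 cr3E0 cr3E1 cr3E2; ring. Qed.
Lemma d3_cr3r a b : d3 (cr3 a b) b = 0.
Proof. rewrite /d3 cr3E0 cr3E1 cr3E2; ring. Qed.
End G.

Lemma dotvE (R : realType) (a b : 'rV[R]_3) : dotv a b = d3 a b.
Proof. by rewrite /dotv /d3 !big_ord_recl big_ord0 addr0 addrA. Qed.

Lemma d3_self_eq0 (R : realType) (a : 'rV[R]_3) : d3 a a = 0 -> a = 0.
Proof.
rewrite /d3 => H.
have h0 := sqr_ge0 (a 0 i0); have h1 := sqr_ge0 (a 0 i1); have h2 := sqr_ge0 (a 0 i2).
rewrite !expr2 in h0 h1 h2.
have e0 : a 0 i0 * a 0 i0 = 0 by lra.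
have e1 : a 0 i1 * a 0 i1 = 0 by lra.
have e2 : a 0 i2 * a 0 i2 = 0 by lra.
apply: vec3P; rewrite mxE.
- by apply/eqP; move: (e0); rewrite -expr2 => /eqP; rewrite sqrf_eq0.
- by apply/eqP; move: (e1); rewrite -expr2 => /eqP; rewrite sqrf_eq0.
- by apply/eqP; move: (e2); rewrite -expr2 => /eqP; rewrite sqrf_eq0.
Qed.

Lemma exists_nonroot (R : realType) (p : {poly R}) : p != 0 -> exists t, p.[t] != 0.
Proof.
move=> p0.
set rs := [seq i%:R | i <- iota 0 (size p)] : seq R.
case: (boolP (all (root p) rs)) => [H|/allPn [t _ Ht]]; last by exists t.
have := max_poly_roots p0 H.
rewrite /rs size_map size_iota ltnn -/rs.
suff U : uniq rs by move/(_ U).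
rewrite map_inj_uniq ?iota_uniq //.
by move=> i j /eqP; rewrite eqr_nat => /eqP.
Qed.

Lemma assemble (R : realType) (T : finType) (e : rel T) (v w : T)
  (z : 'rV[R]_3) (P : T -> 'rV[R]_3) :
  (forall x y, x != y -> (d3 (P x) (P y) == 0) = e x y) ->
  (forall y, (d3 z (P y) == 0) = (y == v) || (y == w)) ->
  z != 0 -> (forall x, P x != 0) -> injective P -> (forall x, z != P x) ->
  exists psi : option T -> 'rV[R]_3,
      injective psi /\ orth_rep (compl_graph (add_vertex e v w)) psi.
Proof.
move=> H1 H2 z0 P0 Pi zP.
exists (fun o => if o is Some x then P x else z); split.
  move=> [x|] [y|] //=.
  - by move=> /Pi ->.
  - by move=> E; move: (zP x); rewrite E eqxx.
  - by move=> E; move: (zP y); rewrite E eqxx.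
split; first by case.
move=> [x|] [y|] Hne; rewrite dotvE /compl_graph Hne /=.
all: rewrite /= ?negbK.
- by apply: H1; apply: contraNneq Hne => ->.
- by rewrite d3C H2.
- by rewrite H2.
- by rewrite eqxx in Hne.
Qed.

Ltac u3 := rewrite /d3 ?(cr3E0, cr3E1, cr3E2, mxE); ring.

Lemma hlin (R : comNzRingType) (a b t : R) : (a%:P + b%:P * 'X).[t] = a + b * t.
Proof. by rewrite hornerD hornerC hornerCM hornerX. Qed.

Lemma d30 (R : comNzRingType) (a : 'rV[R]_3) : d3 0 a = 0.
Proof. by rewrite /d3 !mxE; ring. Qed.

Lemma d3_self_neq0 (R : realType) (a : 'rV[R]_3) : a != 0 -> d3 a a != 0.
Proof. by move=> a0; apply/eqP => /d3_self_eq0 /eqP; apply/negP. Qed.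

Lemma caseA (R : realType) (T : finType) (e : rel T) (v w : T) (phi : T -> 'rV[R]_3) :
  symmetric e -> irreflexive e -> v != w -> injective phi -> (forall x, phi x != 0) ->
  (forall x y, x != y -> (d3 (phi x) (phi y) == 0) = e x y) ->
  (forall y, e v y = (y == w)) -> (forall y, e w y = (y == v)) ->
  exists psi : option T -> 'rV[R]_3,
      injective psi /\ orth_rep (compl_graph (add_vertex e v w)) psi.
Proof.
move=> sym irr vw phiI phi0 O Ev Ew.
set V := phi v; set W := phi w; set C := cr3 V W.
have VW : d3 V W = 0 by apply/eqP; rewrite O // Ev eqxx.
have XV x : x != v -> x != w -> d3 (phi x) V != 0.
  by move=> xv xw; rewrite O // sym Ev (negbTE xw).
have XW x : x != v -> x != w -> d3 (phi x) W != 0.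
  by move=> xv xw; rewrite O // sym Ew (negbTE xv).
have VV : d3 V V != 0 := d3_self_neq0 (phi0 v).
have WW : d3 W W != 0 := d3_self_neq0 (phi0 w).
have CC : d3 C C != 0.
  have -> : d3 C C = d3 V V * d3 W W - d3 V W * d3 V W.
    by rewrite /C; u3.
  by rewrite VW mulr0 subr0 mulf_neq0.
pose L1 (X : 'rV[R]_3) : {poly R} := (d3 W X)%:P + (d3 C X)%:P * 'X.
pose L2 (X : 'rV[R]_3) : {poly R} := (d3 C X)%:P + (d3 (cr3 V C) X)%:P * 'X.
have L1E X t : (L1 X).[t] = d3 (W + t *: C) X.
  by rewrite /L1 hlin; u3.
have L2E X t : (L2 X).[t] = d3 (cr3 V (W + t *: C)) X.
  by rewrite /L2 hlin; u3.
have L1n x : x != v -> x != w -> L1 (phi x) != 0.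
  move=> xv xw; apply/eqP => H; have := congr1 (horner^~ 0) H.
  by rewrite L1E scale0r addr0 horner0 d3C => E; move: (XW x xv xw); rewrite E eqxx.
have L2n x : x != v -> x != w -> L2 (phi x) != 0.
  move=> xv xw; apply/eqP => H.
  have h0 := congr1 (horner^~ 0) H; have h1 := congr1 (horner^~ 1) H.
  rewrite /= /L2 !hlin !horner0 mulr0 addr0 in h0 h1.
  have : d3 (cr3 V C) (phi x) = 0 by rewrite h0 add0r mulr1 in h1.
  have -> : d3 (cr3 V C) (phi x) = d3 V W * d3 V (phi x) - d3 V V * d3 W (phi x).
    by rewrite /C; u3.
  rewrite VW mul0r sub0r => /eqP.
  by rewrite oppr_eq0 mulf_eq0 (negbTE VV) d3C (negbTE (XW x xv xw)).
pose Pp := \prod_(x | (x != v) && (x != w)) (L1 (phi x) * L2 (phi x)).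
have Pn : Pp != 0.
  by apply/prodf_neq0 => x /andP [xv xw]; rewrite mulf_neq0 ?L1n ?L2n.
have [t Pt] := exists_nonroot Pn.
have Ht x : x != v -> x != w -> (d3 (W + t *: C) (phi x) != 0) &&
                                  (d3 (cr3 V (W + t *: C)) (phi x) != 0).
  move=> xv xw; move: Pt; rewrite /Pp horner_prod => /prodf_neq0 /(_ x).
  by rewrite xv xw hornerM mulf_eq0 negb_or L1E L2E => /(_ isT).
set pw := W + t *: C; set z := cr3 V pw.
have Vpw : d3 V pw = 0.
  have -> : d3 V pw = d3 V W + t * d3 (cr3 V W) V by rewrite /pw; u3.
  by rewrite VW d3_cr3l mulr0 addr0.
have zV : d3 z V = 0 by rewrite d3_cr3l.
have zpw : d3 z pw = 0 by rewrite d3_cr3r.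
have pwW : d3 pw W != 0.
  have -> : d3 pw W = d3 W W + t * d3 (cr3 V W) W by rewrite /pw; u3.
  by rewrite d3_cr3r mulr0 addr0.
have pw0 : pw != 0 by apply: contraNneq pwW => ->; rewrite d30.
have pwpw : d3 pw pw != 0 := d3_self_neq0 pw0.
have z0 : z != 0.
  apply: contraNneq CC => z0.
  have : d3 z C = d3 (cr3 V W) C + t * d3 (cr3 V C) C by rewrite /z /pw; u3.
  by rewrite z0 d30 d3_cr3r mulr0 addr0 => <-.
pose P x := if x == v then V else if x == w then pw else phi x.
have PnE x : x != w -> P x = phi x.
  by move=> xw; rewrite /P; case: eqP => [->//|_]; rewrite (negbTE xw).
have Pw : P w = pw by rewrite /P eq_sym (negbTE vw) eqxx.
have PV y : y != w -> d3 (P y) V != 0.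
  move=> yw; rewrite PnE //; case: (eqVneq y v) => [eyv|yv]; [by rewrite eyv | exact: XV].
have pwV : d3 pw V = 0 by rewrite d3C.
apply: (@assemble _ _ _ _ _ z P).
- move=> x y xy.
  case: (eqVneq x w) => [exw|xw]; case: (eqVneq y w) => [eyw|yw].
  + by move: xy; rewrite exw eyw eqxx.
  + rewrite exw Pw Ew; case: (eqVneq y v) => [eyv|yv]; first by rewrite eyv PnE // pwV eqxx.
    by rewrite PnE //; move: (Ht y yv yw) => /andP [/negbTE -> _].
  + rewrite eyw Pw (d3C (P x) pw) sym Ew; case: (eqVneq x v) => [exv|xv]; first by rewrite exv PnE // pwV eqxx.
    by rewrite PnE //; move: (Ht x xv xw) => /andP [/negbTE -> _].
  + by rewrite !PnE // O.
- move=> y; case: (eqVneq y w) => [eyw|yw]; first by rewrite eyw Pw zpw !eqxx orbT.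
  case: (eqVneq y v) => [eyv|yv]; first by rewrite eyv PnE // zV eqxx.
  by rewrite PnE //=; move: (Ht y yv yw) => /andP [_ /negbTE ->].
- exact: z0.
- move=> x; case: (eqVneq x w) => [exw|xw]; first by rewrite exw Pw.
  by rewrite PnE.
- move=> x y Hxy; apply/eqP; apply/negPn/negP => xy.
  case: (eqVneq x w) => [exw|xw]; case: (eqVneq y w) => [eyw|yw].
  + by rewrite exw eyw eqxx in xy.
  + by move: (PV y yw); rewrite -Hxy exw Pw pwV eqxx.
  + by move: (PV x xw); rewrite Hxy eyw Pw pwV eqxx.
  + by move: Hxy; rewrite !PnE // => /phiI /eqP; apply/negP.
- move=> x; case: (eqVneq x w) => [exw|xw].
    by rewrite exw Pw; apply: contraNneq pwpw => E; rewrite -{1}E zpw.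
  by apply: contraNneq (PV x xw) => <-; rewrite zV.
Qed.


Definition evr (R : comNzRingType) (t : R) (p : 'rV[{poly R}]_3) : 'rV[R]_3 :=
  \row_j (p 0 j).[t].
Definition cp (R : comNzRingType) (c : 'rV[R]_3) : 'rV[{poly R}]_3 := \row_j (c 0 j)%:P.

Lemma evr_d3 (R : comNzRingType) t (p q : 'rV[{poly R}]_3) :
  (d3 p q).[t] = d3 (evr t p) (evr t q).
Proof. by rewrite /d3 !hornerD !hornerM !mxE. Qed.

Lemma evr_cr3 (R : comNzRingType) t (p q : 'rV[{poly R}]_3) :
  evr t (cr3 p q) = cr3 (evr t p) (evr t q).
Proof.
by apply: vec3P; rewrite [LHS]mxE ?(cr3E0, cr3E1, cr3E2) !hornerD !hornerN !hornerM !mxE.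
Qed.

Lemma evr_cp (R : comNzRingType) t (c : 'rV[R]_3) : evr t (cp c) = c.
Proof. by apply/rowP => j; rewrite !mxE hornerC. Qed.

Lemma crossnz (R : realType) (X Y U : 'rV[R]_3) :
  d3 Y U = 0 -> d3 X U != 0 -> d3 Y Y != 0 -> cr3 X Y != 0.
Proof.
move=> YU XU YY; apply/eqP => E.
have : d3 (cr3 (cr3 X Y) U) Y = d3 X U * d3 Y Y - d3 Y U * d3 X Y by u3.
rewrite E YU mul0r subr0.
have -> : d3 (cr3 0 U) Y = 0 by rewrite /d3 ?(cr3E0, cr3E1, cr3E2, mxE); ring.
by move=> /esym /eqP; rewrite mulf_eq0 (negbTE XU) (negbTE YY).
Qed.

Section CB.
Variables (R : realType) (s : 'rV[R]_3).
Definition zp : 'rV[{poly R}]_3 := \row_j ((s 0 j)%:P + 'X^(j.+1)).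
Definition Lp (c : 'rV[R]_3) : {poly R} := d3 (cp c) zp.

Lemma Lp_coef c : forall j : 'I_3, (Lp c)`_(j.+1) = c 0 j.
Proof.
apply: ord3P; rewrite /Lp /d3 !mxE !coefD !coefCM !coefD !coefC !coefXn /=; ring.
Qed.

Lemma Lp_neq0 c : c != 0 -> Lp c != 0.
Proof.
move=> c0; apply: contraNneq c0 => E; apply/eqP/rowP => j.
by rewrite -Lp_coef E coef0 mxE.
Qed.
End CB.

Lemma caseB (R : realType) (T : finType) (e : rel T) (v w a b : T) (phi : T -> 'rV[R]_3) :
  symmetric e -> v != w -> a != v -> a != w -> b != v -> b != w -> a != b ->
  injective phi -> (forall x, phi x != 0) ->
  (forall x y, x != y -> (d3 (phi x) (phi y) == 0) = e x y) ->
  (forall y, e v y = (y == a)) -> (forall y, e w y = (y == b)) ->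
  exists psi : option T -> 'rV[R]_3,
      injective psi /\ orth_rep (compl_graph (add_vertex e v w)) psi.
Proof.
move=> sym vw av aw bv bw ab phiI phi0 O Ev Ew.
set V := phi v; set W := phi w; set A := phi a; set B := phi b.
have AV : d3 A V = 0 by apply/eqP; rewrite O // sym Ev eqxx.
have BW : d3 B W = 0 by apply/eqP; rewrite O // sym Ew eqxx.
have XV x : x != v -> x != a -> d3 (phi x) V != 0.
  by move=> xv xa; rewrite O // sym Ev (negbTE xa).
have XW x : x != w -> x != b -> d3 (phi x) W != 0.
  by move=> xw xb; rewrite O // sym Ew (negbTE xb).
have AA : d3 A A != 0 := d3_self_neq0 (phi0 a).
have BB : d3 B B != 0 := d3_self_neq0 (phi0 b).
set s := A + B.
pose Q := d3 (cr3 (cp A) (zp s)) (cr3 (cp B) (zp s)).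
have QE t : Q.[t] = d3 (cr3 A (evr t (zp s))) (cr3 B (evr t (zp s))).
  by rewrite /Q evr_d3 !evr_cr3 !evr_cp.
have LE c t : (Lp s c).[t] = d3 c (evr t (zp s)).
  by rewrite /Lp evr_d3 evr_cp.
have z00 : evr 0 (zp s) = s.
  by apply/rowP => j; rewrite !mxE hornerD hornerC hornerXn expr0n /= addr0.
have Qn : Q != 0.
  apply/eqP => H; have := congr1 (horner^~ 0) H; rewrite /= QE z00 horner0.
  have -> : d3 (cr3 A s) (cr3 B s) = - d3 (cr3 B A) (cr3 B A) by rewrite /s; u3.
  move=> /eqP; rewrite oppr_eq0; apply/negP/d3_self_neq0/(crossnz AV) => //.
  by apply: XV; rewrite // eq_sym.
pose Pp := Q * \prod_(x | (x != v) && (x != w)) Lp s (phi x)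
  * \prod_(x | [&& x != v, x != w & x != a]) Lp s (cr3 (phi x) A)
  * \prod_(x | [&& x != v, x != w & x != b]) Lp s (cr3 (phi x) B).
have Pn : Pp != 0.
  rewrite /Pp !mulf_neq0 //.
  - by apply/prodf_neq0 => x /andP [xv xw]; apply: Lp_neq0.
  - apply/prodf_neq0 => x /and3P [xv xw xa]; apply/Lp_neq0/(crossnz AV) => //.
    exact: XV.
  - apply/prodf_neq0 => x /and3P [xv xw xb]; apply/Lp_neq0/(crossnz BW) => //.
    exact: XW.
have [t Pt] := exists_nonroot Pn.
move: Pt; rewrite /Pp !hornerM !horner_prod !mulf_eq0 !negb_or => /andP [/andP [/andP [Qt P1] P2] P3].
set z := evr t (zp s).
set pv := cr3 A z; set pw := cr3 B z.
have F1 x : x != v -> x != w -> d3 (phi x) z != 0.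
  by move=> xv xw; move/prodf_neq0: P1 => /(_ x); rewrite xv xw LE => /(_ isT).
have F2 x : x != v -> x != w -> x != a -> d3 pv (phi x) != 0.
  move=> xv xw xa; move/prodf_neq0: P2 => /(_ x); rewrite xv xw xa LE => /(_ isT).
  by have -> : d3 pv (phi x) = d3 (cr3 (phi x) A) z by rewrite /pv; u3.
have F3 x : x != v -> x != w -> x != b -> d3 pw (phi x) != 0.
  move=> xv xw xb; move/prodf_neq0: P3 => /(_ x); rewrite xv xw xb LE => /(_ isT).
  by have -> : d3 pw (phi x) = d3 (cr3 (phi x) B) z by rewrite /pw; u3.
have F4 : d3 pv pw != 0 by rewrite -QE.
have pvA : d3 pv A = 0 by rewrite d3_cr3l.
have pwB : d3 pw B = 0 by rewrite d3_cr3l.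
have pvz : d3 pv z = 0 by rewrite d3_cr3r.
have pwz : d3 pw z = 0 by rewrite d3_cr3r.
have ba : b != a by rewrite eq_sym.
have pwA : d3 pw A != 0 by apply: F3; rewrite // eq_sym.
have pvB : d3 pv B != 0 by apply: F2.
pose P x := if x == v then pv else if x == w then pw else phi x.
have PnE x : x != v -> x != w -> P x = phi x.
  by move=> xv xw; rewrite /P (negbTE xv) (negbTE xw).
have Pv : P v = pv by rewrite /P eqxx.
have Pw : P w = pw by rewrite /P eq_sym (negbTE vw) eqxx.
have Hv y : y != v -> (d3 pv (P y) == 0) = e v y.
  move=> yv; rewrite Ev; case: (eqVneq y w) => [eyw|yw].
    by rewrite eyw Pw (negbTE F4) eq_sym (negbTE aw).
  rewrite PnE //; case: (eqVneq y a) => [eya|ya]; first by rewrite eya pvA eqxx.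
  by rewrite (negbTE (F2 y yv yw ya)).
have Hw y : y != w -> (d3 pw (P y) == 0) = e w y.
  move=> yw; rewrite Ew; case: (eqVneq y v) => [eyv|yv].
    by rewrite eyv Pv d3C (negbTE F4) eq_sym (negbTE bv).
  rewrite PnE //; case: (eqVneq y b) => [eyb|yb]; first by rewrite eyb pwB eqxx.
  by rewrite (negbTE (F3 y yv yw yb)).
have Zt y : y != v -> y != w -> d3 (P y) z != 0 by move=> yv yw; rewrite PnE // F1.
apply: (@assemble _ _ _ _ _ z P).
- move=> x y xy.
  case: (eqVneq x v) => [exv|xv]; first by rewrite exv Pv Hv // -exv eq_sym.
  case: (eqVneq x w) => [exw|xw]; first by rewrite exw Pw Hw // -exw eq_sym.
  case: (eqVneq y v) => [eyv|yv]; first by rewrite eyv Pv d3C Hv // sym.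
  case: (eqVneq y w) => [eyw|yw]; first by rewrite eyw Pw d3C Hw // sym.
  by rewrite !PnE // O.
- move=> y; case: (eqVneq y v) => [eyv|yv]; first by rewrite eyv Pv d3C pvz eqxx.
  case: (eqVneq y w) => [eyw|yw]; first by rewrite eyw Pw d3C pwz !eqxx orbT.
  by rewrite d3C (negbTE (Zt y yv yw)).
- by apply: contraNneq (F1 a av aw) => ->; rewrite d3C d30.
- move=> x; case: (eqVneq x v) => [exv|xv].
    by rewrite exv Pv; apply: contraNneq pvB => ->; rewrite d30.
  case: (eqVneq x w) => [exw|xw].
    by rewrite exw Pw; apply: contraNneq pwA => ->; rewrite d30.
  by rewrite PnE.
- have Pvz x : x != v -> P x != pv.
    move=> xv; case: (eqVneq x w) => [exw|xw].
      by rewrite exw Pw; apply: contraNneq pwA => ->; rewrite pvA.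
    by apply: contraNneq (Zt x xv xw) => ->; rewrite pvz.
  have Pwz x : x != w -> P x != pw.
    move=> xw; case: (eqVneq x v) => [exv|xv].
      by rewrite exv Pv; apply: contraNneq pwA => <-; rewrite pvA.
    by apply: contraNneq (Zt x xv xw) => ->; rewrite pwz.
  move=> x y Hxy; apply/eqP; apply/negPn/negP => xy.
  case: (eqVneq y v) => [eyv|yv].
    by move: (Pvz x); rewrite Hxy eyv Pv eqxx -eyv xy => /(_ isT).
  case: (eqVneq y w) => [eyw|yw].
    by move: (Pwz x); rewrite Hxy eyw Pw eqxx -eyw xy => /(_ isT).
  case: (eqVneq x v) => [exv|xv].
    by move: (Pvz y yv); rewrite -Hxy exv Pv eqxx.
  case: (eqVneq x w) => [exw|xw].
    by move: (Pwz y yw); rewrite -Hxy exw Pw eqxx.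
  by move: Hxy; rewrite !PnE // => /phiI /eqP; apply/negP.
- move=> x; case: (eqVneq x v) => [exv|xv].
    by rewrite exv Pv; apply: contraNneq (F1 a av aw) => ->; rewrite d3C pvA.
  case: (eqVneq x w) => [exw|xw].
    by rewrite exw Pw; apply: contraNneq (F1 b bv bw) => ->; rewrite d3C pwB.
  rewrite PnE //; case: (eqVneq x a) => [exa|xa].
    by apply: contraNneq pwA => E; rewrite /A -exa -E pwz.
  by apply: contraNneq (F2 x xv xw xa) => <-; rewrite pvz.
Qed.

Unset Implicit Arguments.
Theorem lemma4p5 (R : realType) (T : finType) (e : rel T) (v w : T) :
  simple_graph e -> v != w ->
  deg e v = 1%N -> deg e w = 1%N ->
  (forall x, ~~ (e v x && e w x)) ->
  (exists phi : T -> 'rV[R]_3, injective phi /\ orth_rep (compl_graph e) phi) ->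
  (exists psi : option T -> 'rV[R]_3,
      injective psi /\ orth_rep (compl_graph (add_vertex e v w)) psi) /\
  mvr_le R (compl_graph (add_vertex e v w)) 3.
Proof.
move=> [irr sym] vw dv dw nc [phi [phiI [phi0 phiO]]].
have O x y : x != y -> (d3 (phi x) (phi y) == 0) = e x y.
  by move=> xy; rewrite -dotvE phiO // /compl_graph xy /= negbK.
have [a Ha] : exists a, [set y | e v y] = [set a].
  by apply/cards1P; rewrite -[#|_|]/(deg e v) dv.
have [b Hb] : exists b, [set y | e w y] = [set b].
  by apply/cards1P; rewrite -[#|_|]/(deg e w) dw.
have Ev y : e v y = (y == a).
  by move/setP: Ha => /(_ y); rewrite !inE.
have Ew y : e w y = (y == b).
  by move/setP: Hb => /(_ y); rewrite !inE.
suff main : exists psi : option T -> 'rV[R]_3,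
      injective psi /\ orth_rep (compl_graph (add_vertex e v w)) psi.
  split => //; exists 3%N; split => //.
  by case: main => psi [_ H]; exists psi.
have av : a != v by apply/eqP => eav; move: (irr v); rewrite -{2}eav Ev eqxx.
have bw : b != w by apply/eqP => ebw; move: (irr w); rewrite -{2}ebw Ew eqxx.
case: (eqVneq a w) => [eaw|aw].
  have ebv : b = v.
    have : e w v by rewrite sym Ev eaw.
    by rewrite Ew => /eqP.
  apply: (caseA sym irr vw phiI phi0 O).
  - by move=> y; rewrite Ev eaw.
  - by move=> y; rewrite Ew ebv.
have bv : b != v.
  apply/eqP => ebv; have : e v w by rewrite sym Ew ebv.
  by rewrite Ev eq_sym (negbTE aw).
have ab : a != b.
  apply: contraNneq (nc a) => eab; rewrite Ev eqxx /=.
  by rewrite Ew eab.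
exact: (caseB sym vw av aw bv bw ab phiI phi0 O Ev Ew).
Qed.
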